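(* Let $q\neq-1$ be real and $n\ge0$. Then $$T_n(x,s,q)=\sum_{k=0}^{\lfloor n/2\rfloor}q^{\binom{n-2k}{2}}\begin{bmatrix} n\\ 2k\end{bmatrix}x^{n-2k}\prod_{j=0}^{k-1}(x^2+q^{2j+1}s)$$ and $$U_n(x,s,q)=\sum_{k=0}^{\lfloor n/2\rfloor}q^{\binom{n-2k}{2}}\begin{bmatrix} n+1\\ 2k+1\end{bmatrix}x^{n-2k}\prod_{j=0}^{k-1}(x^2+q^{2j+1}s).$$
   Context: $T_0=1$, $T_1=x$, $T_n(x,s,q)=(1+q^{n-1})x\,T_{n-1}(x,s,q)+q^{n-1}s\,T_{n-2}(x,s,q)$ for $n\ge2$; $U_{-1}=0$, $U_0=1$, $U_n(x,s,q)=(1+q^{n})x\,U_{n-1}(x,s,q)+q^{n-1}s\,U_{n-2}(x,s,q)$ for $n\ge1$. Notation: $[m]=1+q+\cdots+q^{m-1}$, $[m]!=[1]\cdots[m]$, $\begin{bmatrix} m\\ j\end{bmatrix}=\frac{[m]!}{[j]![m-j]!}$; $\binom{0}{2}=\binom12=0$; empty products equal $1$. *)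

(* Defs.v *)
From mathcomp Require Import all_boot all_order all_algebra.
Set Implicit Arguments. Unset Strict Implicit. Unset Printing Implicit Defensive.
Import Order.TTheory GRing.Theory Num.Theory.
Local Open Scope ring_scope.

Section QDefs.
Variable R : fieldType.

Definition qint (q : R) (m : nat) : R := \sum_(0 <= i < m) q ^+ i.
Definition qfact (q : R) (m : nat) : R := \prod_(1 <= i < m.+1) qint q i.
Definition qbinom (q : R) (m j : nat) : R :=
  qfact q m / (qfact q j * qfact q (m - j)).

Fixpoint Tpoly (x s q : R) (n : nat) {struct n} : R :=
  match n with
  | 0 => 1
  | 1 => x
  | (m.+1 as p).+1 =>
      (1 + q ^+ p) * x * Tpoly x s q p + q ^+ p * s * Tpoly x s q m
  end.

(* U_(-1) = 0, U_0 = 1, U_n = (1+q^n) x U_(n-1) + q^(n-1) s U_(n-2);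
   hence U_1 = (1+q) x. *)
Fixpoint Upoly (x s q : R) (n : nat) {struct n} : R :=
  match n with
  | 0 => 1
  | 1 => (1 + q) * x
  | (m.+1 as p).+1 =>
      (1 + q ^+ p.+1) * x * Upoly x s q p + q ^+ p * s * Upoly x s q m
  end.
End QDefs.

(* Main.v *)
Require Import Defs.
From mathcomp Require Import all_boot all_order all_algebra.
From mathcomp Require Import ring zify.
Import Order.TTheory GRing.Theory Num.Theory.
Local Open Scope ring_scope.

Section Aux.
Variable R : realFieldType.
Variables (q x s : R).
Hypothesis hq : q != -1.

Lemma qint_add a b : qint q (a + b) = qint q a + q ^+ a * qint q b.
Proof.
elim: b => [|b IH]; first by by rewrite /qint addn0 [X in _ + _ * X]big_geq // mulr0 addr0.
rewrite addnS /qint !big_nat_recr //= -/(qint q (a+b)) -/(qint q b) IH.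
by rewrite -/(qint q a) exprD; ring.
Qed.

Lemma qint_mul1q m : qint q m * (1 - q) = 1 - q ^+ m.
Proof.
elim: m => [|m IH]; first by rewrite /qint big_geq // mul0r expr0 subrr.
have -> : qint q m.+1 = qint q m + q ^+ m by rewrite -addn1 qint_add /qint big_nat1 expr0 mulr1.
by rewrite mulrDl IH exprS; ring.
Qed.

Lemma qint_neq0 m : (0 < m)%N -> qint q m != 0.
Proof.
move=> m0.
have [->|q1] := eqVneq q 1.
  rewrite /qint (eq_bigr (fun _ => 1)) => [|i _]; last by rewrite expr1n.
  by rewrite sumr_const_nat subn0 -[X in X != _]mulr_natr mul1r pnatr_eq0 -lt0n.
apply/negP => /eqP h.
have := qint_mul1q m; rewrite h mul0r => /esym /eqP; rewrite subr_eq0 eq_sym => /eqP hm.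
have : `|q| ^+ m = 1 by rewrite -normrX hm normr1.
move/eqP; rewrite pexpr_eq1 // => /eqP hn.
case: (ger0P q) => hq0.
  by move: q1; rewrite -(ger0_norm hq0) hn eqxx.
by move: hq; rewrite -[q]opprK -(ltr0_norm hq0) hn eqxx.
Qed.

Lemma qfact_neq0 m : qfact q m != 0.
Proof.
rewrite /qfact; elim: m => [|m IH]; first by rewrite big_geq // oner_eq0.
by rewrite big_nat_recr //= mulf_neq0 // qint_neq0.
Qed.

Lemma qfactS m : qfact q m.+1 = qfact q m * qint q m.+1.
Proof. by rewrite /qfact big_nat_recr. Qed.

Definition G n j := if (j <= n)%N then qbinom q n j else 0.

Lemma G_gt n j : (n < j)%N -> G n j = 0.
Proof. by rewrite /G ltnNge => /negbTE ->. Qed.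

Lemma G0 n : G n 0 = 1.
Proof.
rewrite /G /qbinom /= subn0 {2}/qfact big_geq // mul1r divff //; exact: qfact_neq0.
Qed.

Lemma Gnn n : G n n = 1.
Proof.
rewrite /G leqnn /qbinom subnn {3}/qfact big_geq // mulr1 divff //; exact: qfact_neq0.
Qed.

Lemma G_P1 n j : G n.+1 j.+1 = G n j + q ^+ j.+1 * G n j.+1.
Proof.
case: (ltngtP j n) => hj; last 2 first.
- by rewrite !G_gt ?mulr0 ?addr0 // ltnW.
- by rewrite hj !Gnn G_gt ?mulr0 ?addr0.
have [d ->] : exists d, n = (j + d).+1 by exists (n - j).-1; lia.
rewrite /G !ifT; try lia. rewrite /qbinom.
have -> : ((j + d).+2 - j.+1 = d.+1)%N by lia.
have -> : ((j + d).+1 - j = d.+1)%N by lia.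
have -> : ((j + d).+1 - j.+1 = d)%N by lia.
rewrite !qfactS.
have -> : (j + d).+2 = (j.+1 + d.+1)%N by lia.
rewrite qint_add.
have := qfact_neq0 j; have := qfact_neq0 d; have := qfact_neq0 (j + d).
have := qint_neq0 _ (ltn0Sn j); have := qint_neq0 _ (ltn0Sn d).
have := qint_neq0 _ (ltn0Sn (j+d)).
have -> : (j + d).+1 = (j.+1 + d)%N by lia.
rewrite qint_add.
move=> h0 h1 h2 h3 h4 h5.
field.
by rewrite h1 h2 h4 h5.
Qed.

Lemma G_P2 n j : G n.+1 j.+1 = q ^+ (n - j) * G n j + G n j.+1.
Proof.
case: (ltngtP j n) => hj; last 2 first.
- by rewrite !G_gt ?mulr0 ?addr0 // ltnW.
- by rewrite hj !Gnn G_gt ?subnn ?expr0 ?mulr1 ?addr0.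
have [d ->] : exists d, n = (j + d).+1 by exists (n - j).-1; lia.
rewrite /G !ifT; try lia. rewrite /qbinom.
have -> : ((j + d).+2 - j.+1 = d.+1)%N by lia.
have -> : ((j + d).+1 - j = d.+1)%N by lia.
have -> : ((j + d).+1 - j.+1 = d)%N by lia.
rewrite !qfactS.
have -> : (j + d).+2 = (d.+1 + j.+1)%N by lia.
rewrite qint_add.
have := qfact_neq0 j; have := qfact_neq0 d; have := qfact_neq0 (j + d).
have := qint_neq0 _ (ltn0Sn j); have := qint_neq0 _ (ltn0Sn d).
have := qint_neq0 _ (ltn0Sn (j+d)).
have -> : (j + d).+1 = (d + j.+1)%N by lia.
rewrite qint_add.
move=> h0 h1 h2 h3 h4 h5.
field.
by rewrite h1 h2 h4 h5.
Qed.

Lemma core1 i : G i.+3 i.+2 = 1 + q ^+ i.+2 + q * G i.+1 i.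
Proof.
rewrite G_P1 G_P2 subSn // subnn !Gnn; ring.
Qed.

Lemma core2 i p :
  q ^+ p.+1 * G (i + p).+4 i.+2 =
  (1 + q ^+ (i + p).+3) * G (i + p).+3 i.+2 + q ^+ (p + p).+3 * G (i + p).+2 i
  - G (i + p).+2 i.+2.
Proof.
rewrite (G_P1 (i + p).+3 i.+1) !(G_P2 (i + p).+2 i.+1) (G_P2 (i + p).+2 i).
have -> : ((i + p).+2 - i.+1 = p.+1)%N by lia.
have -> : ((i + p).+2 - i = p.+2)%N by lia.
rewrite !exprS !exprD ?exprS; ring.
Qed.

Definition P k := \prod_(0 <= j < k) (x ^+ 2 + q ^+ (2 * j + 1) * s).
Lemma P0 : P 0 = 1. Proof. by rewrite /P big_geq. Qed.
Lemma PS k : P k.+1 = P k * (x ^+ 2 + q ^+ (2 * k + 1) * s).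
Proof. by rewrite /P big_nat_recr. Qed.

Definition tm e n k :=
  q ^+ 'C(n - 2 * k, 2) * G (n + e) (2 * k + e) * x ^+ (n - 2 * k) * P k.
Definition E e n k := match k with 0 => 0 | k'.+1 =>
  q ^+ (n - 2 * k') * q ^+ 'C(n - 2 * k', 2) * G (n + e) (2 * k' + e)
    * x ^+ (n - 2 * k') * P k end.
Definition E' e n k :=
  q ^+ (n - 2 * k) * q ^+ 'C(n - 2 * k, 2) * G (n + e) (2 * k + e)
    * x ^+ (n - 2 * k + 2) * P k.

Lemma lk e n k : q ^+ n.+1 * s * tm e n k = E e n k.+1 - E' e n k.
Proof.
rewrite /tm /E /E'.
case: (ltnP n (2 * k)) => hk.
  by rewrite G_gt ?(mulr0,mul0r,subrr) //; lia.
have [m ->] : exists m, n = (2 * k + m)%N by exists (n - 2 * k)%N; lia.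
have -> : (2 * k + m - 2 * k = m)%N by lia.
rewrite PS.
have -> : (2 * k + m).+1 = (m + (2 * k + 1))%N by lia.
rewrite !exprD; ring.
Qed.

Lemma ptS e n k : tm e n.+2 k.+1 =
  (1 + q ^+ (n.+1 + e)) * (x * tm e n.+1 k.+1) + E e n k.+1 - E' e n k.+1.
Proof.
rewrite /tm /E /E'.
case: (ltnP n (2 * k)) => hk.
  rewrite !G_gt; try lia.
  by rewrite !(mulr0,mul0r,subrr,addr0).
have [m ->] : exists m, n = (2 * k + m)%N by exists (n - 2 * k)%N; lia.
have -> : ((2 * k + m).+2 - 2 * k.+1 = m)%N by lia.
have -> : ((2 * k + m).+1 - 2 * k.+1 = m - 1)%N by lia.
have -> : ((2 * k + m) - 2 * k = m)%N by lia.
have -> : ((2 * k + m) - 2 * k.+1 = m - 2)%N by lia.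
have -> : ((2 * k + m).+2 + e = (2 * k + e + m).+2)%N by lia.
have -> : ((2 * k + m).+1 + e = (2 * k + e + m).+1)%N by lia.
have -> : ((2 * k + m) + e = (2 * k + e + m))%N by lia.
have -> : (2 * k.+1 + e = (2 * k + e).+2)%N by lia.
move: (2 * k + e)%N => i.
case: m => [|[|p]].
- rewrite addn0 !Gnn !G_gt; try lia.
  by rewrite /= !(mulr0,mul0r,addr0,subr0,add0r,expr0,mul1r,mulr1).
- rewrite addn1 core1 Gnn (@G_gt i.+1 i.+2) //= .
  rewrite !(mulr0,mul0r,addr0,subr0,add0r,expr0,mul1r,mulr1,expr1). ring.
- have -> : (p.+2 - 1 = p.+1)%N by lia.
  have -> : (p.+2 - 2 = p)%N by lia.
  rewrite !addnS.
  have hG2 : G (i + p).+2 i.+2 = (1 + q ^+ (i + p).+3) * G (i + p).+3 i.+2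
     + q ^+ (p + p).+3 * G (i + p).+2 i - q ^+ p.+1 * G (i + p).+4 i.+2.
    by rewrite core2; ring.
  rewrite hG2 !binS bin1 bin0 addn0 !exprS !exprD. ring.
Qed.

Lemma pt0 e n : (e <= 1)%N -> tm e n.+2 0 =
  (1 + q ^+ (n.+1 + e)) * (x * tm e n.+1 0) + E e n 0 - E' e n 0.
Proof.
rewrite /tm /E /E' muln0 !subn0 add0n P0.
case: e => [|[|//]] _.
  rewrite !addn0 !G0 !binS !bin1 bin0 !exprS !exprD; ring.
rewrite !addn1 (G_P1 n.+2 0) G0 (G_P2 n.+1 0) !G0 subn0.
rewrite !binS !bin1 bin0 !exprS !exprD; ring.
Qed.

Lemma pt e n k : (e <= 1)%N -> tm e n.+2 k =
  (1 + q ^+ (n.+1 + e)) * (x * tm e n.+1 k) + E e n k - E' e n k.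
Proof. by case: k => [|k] he; [apply: pt0 | apply: ptS]. Qed.

Lemma rec_sum e n : (e <= 1)%N ->
  \sum_(0 <= k < n.+2) tm e n.+2 k =
  (1 + q ^+ (n.+1 + e)) * x * \sum_(0 <= k < n.+2) tm e n.+1 k
  + q ^+ n.+1 * s * \sum_(0 <= k < n.+2) tm e n k.
Proof.
move=> he.
have hE : \sum_(0 <= k < n.+2) E e n k.+1 = \sum_(0 <= k < n.+2) E e n k.
  rewrite [LHS]big_nat_recr // [RHS]big_nat_recl // [E e n 0]/= add0r [E e n n.+2]/E.
  rewrite (@G_gt (n + e) (2 * n.+1 + e)); last by lia.
  by rewrite mulr0 !mul0r; exact: addr0.
under eq_bigr => k _ do rewrite pt //.
rewrite [q ^+ n.+1 * s * _]mulr_sumr.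
under [X in _ = _ + X]eq_bigr => k _ do rewrite lk.
rewrite !sumrB big_split /= hE.
rewrite -[(1 + _) * x * _]mulrA !mulr_sumr; ring.
Qed.

Lemma range_sum e n N : (n./2 < N)%N ->
  \sum_(0 <= k < N) tm e n k = \sum_(0 <= k < n./2.+1) tm e n k.
Proof.
move=> hN.
rewrite (@big_cat_nat _ _ _ n./2.+1) //=.
rewrite -[RHS]addr0; congr (_ + _).
rewrite big_nat_cond big1 // => k /andP[/andP[hk _] _].
rewrite /tm G_gt ?(mulr0,mul0r) //.
move: hk; rewrite ltn_half_double -mul2n; lia.
Qed.

Lemma tm0 e : tm e 0 0 = 1.
Proof. by rewrite /tm /= Gnn P0 !mulr1. Qed.

Lemma Tfull n : Tpoly x s q n = \sum_(0 <= k < n./2.+1) tm 0 n k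
   /\ Tpoly x s q n.+1 = \sum_(0 <= k < n.+1./2.+1) tm 0 n.+1 k.
Proof.
elim: n => [|n [IH1 IH2]].
  rewrite /= !big_nat1 tm0; split => //.
  by rewrite /tm /= G0 P0 expr0 !mul1r mulr1 expr1.
split => //.
have -> : Tpoly x s q n.+2 =
  (1 + q ^+ n.+1) * x * Tpoly x s q n.+1 + q ^+ n.+1 * s * Tpoly x s q n by [].
rewrite IH1 IH2 -!(@range_sum 0 _ n.+2) ?rec_sum ?addn0 //.
all: try by rewrite ltn_half_double -mul2n; lia.
Qed.

Lemma Ufull n : Upoly x s q n = \sum_(0 <= k < n./2.+1) tm 1 n k
   /\ Upoly x s q n.+1 = \sum_(0 <= k < n.+1./2.+1) tm 1 n.+1 k.
Proof.
elim: n => [|n [IH1 IH2]].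
  rewrite /= !big_nat1 tm0; split => //.
  by rewrite /tm /= (G_P1 1 0) G0 Gnn P0 expr0 !mul1r !mulr1 expr1.
split => //.
have -> : Upoly x s q n.+2 =
  (1 + q ^+ (n.+1 + 1)) * x * Upoly x s q n.+1 + q ^+ n.+1 * s * Upoly x s q n
  by rewrite addn1.
rewrite IH1 IH2 -!(@range_sum 1 _ n.+2) ?rec_sum //.
all: try by rewrite ltn_half_double -mul2n; lia.
Qed.
End Aux.

Theorem theorem2p7 (R : realFieldType) (q x s : R) (n : nat) :
  q != -1 ->
  Tpoly x s q n =
    \sum_(0 <= k < n./2.+1)
      q ^+ 'C(n - 2 * k, 2) * qbinom q n (2 * k) * x ^+ (n - 2 * k)
        * \prod_(0 <= j < k) (x ^+ 2 + q ^+ (2 * j + 1) * s)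
  /\
  Upoly x s q n =
    \sum_(0 <= k < n./2.+1)
      q ^+ 'C(n - 2 * k, 2) * qbinom q n.+1 (2 * k + 1) * x ^+ (n - 2 * k)
        * \prod_(0 <= j < k) (x ^+ 2 + q ^+ (2 * j + 1) * s).
Proof.
move=> hq.
have [T1 _] := @Tfull _ q x s hq n.
have [U1 _] := @Ufull _ q x s hq n.
rewrite T1 U1; split; apply: eq_big_nat => k /andP[_ hk];
  rewrite /tm /G /P ifT ?addn0 ?addn1 //.
all: move: hk; rewrite ltnS geq_half_double -mul2n; lia.
Qed.
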